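(* Let $G$ be an infinite compact metrizable abelian group with normalized Haar measure $m$, and let $\rho$ be an admissible (semi)metric on $(G,m)$ invariant under all translations. Then there exists a sequence $(g_n)$ of elements of $G$ that converges to $0$ both in the group topology of $G$ and with respect to $\rho$ (i.e. $\rho(0,g_n)\to 0$).
   Context: A measurable $\rho:G\times G\to\mathbb R_+$ is an admissible (semi)metric if (1) it is a semimetric (resp. metric) in the usual sense on a set of full measure and $\int\int\rho\,dm\,dm<\infty$, and (2) the completion of $(G,\rho)$, or of the quotient of $G$ by the partition into classes $\{y:\rho(x,y)=0\}$ in the semimetric case, is a Polish space on which $m$ (resp. the quotient measure) is a Borel probability measure (the Borel $\sigma$-algebra being dense mod $0$ in the measurable $\sigma$-algebra). Invariance means $\rho(x+h,y+h)=\rho(x,y)$ for all $h$. *)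

(* Defs.v *)
From HB Require Import structures.
From mathcomp Require Import all_boot all_order all_algebra.
From mathcomp Require Import all_classical all_reals all_analysis.
Set Implicit Arguments. Unset Strict Implicit. Unset Printing Implicit Defensive.
Import Order.TTheory GRing.Theory Num.Theory.
Local Open Scope classical_set_scope.
Local Open Scope ring_scope.

Definition metrizable (R : realType) (T : topologicalType) : Prop :=
  exists d : T -> T -> R,
    [/\ (forall x y, 0 <= d x y),
        (forall x y, d x y = 0 <-> x = y),
        (forall x y, d x y = d y x),
        (forall x y z, d x z <= d x y + d y z) &
        (forall (x : T) (A : set T),
            nbhs x A <-> exists2 e : R, 0 < e & [set y | d x y < e] `<=` A)].

Definition zpointed (G : topologicalZmodType) : Type := G.
HB.instance Definition _ (G : topologicalZmodType) := Choice.on (zpointed G).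
HB.instance Definition _ (G : topologicalZmodType) :=
  isPointed.Build (zpointed G) (0 : G).
Notation borel G := (g_sigma_algebraType (@open G : set (set (zpointed G)))).

Definition semimetric_on {T : Type} {R : realType} (X : set T) (rho : T -> T -> R) :=
  forall x y z, X x -> X y -> X z ->
    [/\ rho x x = 0, rho x y = rho y x & rho x z <= rho x y + rho y z].

Definition rho_balls {T : Type} {R : realType} (X : set T) (rho : T -> T -> R)
  : set (set T) :=
  [set B | exists x r, [/\ X x, 0 < r & B = X `&` [set y | rho x y < r]]].

(* Admissible semimetric on the probability space (T, m):
   (1) nonnegative measurable function, semimetric on a set X of full measure,
       with finite double integral;
   (2) the quotient of (X, rho) by {rho = 0} is separable (equivalently its
       completion is Polish); the quotient map is then Borel and m induces a
       Borel probability measure on it; and the (pulled back) Borel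
       sigma-algebra of rho is dense mod 0 in the measurable sigma-algebra. *)
Definition admissible_semimetric {d} {T : measurableType d} {R : realType}
  (m : probability T R) (rho : T -> T -> R) : Prop :=
  [/\ (forall x y, 0 <= rho x y),
      measurable_fun [set: T * T] (fun p : T * T => rho p.1 p.2),
      (\int[m]_x \int[m]_y (rho x y)%:E < +oo)%E &
      exists X : set T,
        [/\ measurable X, m X = 1%E, semimetric_on X rho,
            (exists D : set T, [/\ countable D, D `<=` X &
               forall x, X x -> forall e : R, 0 < e ->
                 exists2 z, D z & rho x z < e]) &
            (forall A : set T, measurable A ->
               exists2 B, <<s rho_balls X rho >> B &
                 m ((A `\` B) `|` (B `\` A)) = 0%E)]].

(* Main.v *)
Require Import Defs.
From HB Require Import structures.
From mathcomp Require Import all_boot all_order all_algebra.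
From mathcomp Require Import all_classical all_reals all_analysis.
From mathcomp Require Import finmap lra.
Import Order.TTheory GRing.Theory Num.Theory numFieldNormedType.Exports.
Local Open Scope classical_set_scope.
Local Open Scope ring_scope.

Lemma sum_cst_seq (R : numDomainType) (I : Type) (s : seq I) (c : \bar R) :
  (\sum_(i <- s) c = c *+ size s)%E.
Proof. elim: s => [|a s IH]; first by rewrite big_nil.
by rewrite big_cons IH [size _]/= muleS. Qed.

Lemma arith_key (R : realFieldType) (r y k b : R) : 0 < r ->
  y < k -> y * r = 1 -> k <= b -> b * r <= 1 -> False.
Proof. move=> *; nra. Qed.

Lemma set1_meas (R : realType) (G : topologicalZmodType) (x : G) :
  metrizable R G -> measurable ([set x] : set (borel G)).
Proof.
move=> [d [d0 dE dsym dtri dnb]].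
rewrite -[X in measurable X]setCK; apply: measurableC.
apply: sub_sigma_algebra; rewrite /= openE => y /= yx.
rewrite /interior; apply/dnb; exists (d y x).
  by rewrite lt_neqAle d0 andbT eq_sym; apply/eqP => /dE.
by move=> z /= dz zx; move: dz; rewrite zx ltxx.
Qed.

Lemma set1_null (R : realType) (G : topologicalZmodType)
  (m : probability (borel G) R) :
  metrizable R G -> ~ finite_set [set: G] ->
  (forall (h : G) (A : set (borel G)), measurable A ->
     m [set x | A (x + h)] = m A) ->
  forall x : G, m ([set x] : set (borel G)) = 0%E.
Proof.
move=> mG inf inv.
have mc x : m ([set x] : set (borel G)) = m ([set (0%R:G)] : set (borel G)).
  rewrite -(inv (- x) _ (@set1_meas R G 0 mG)); congr (m _).
  by apply/seteqP; split => y /=; [move=> ->; rewrite subrr|move/eqP; rewrite subr_eq0 => /eqP].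
move=> x; rewrite mc.
have c0 : (0 <= m ([set (0%R:G)] : set (borel G)))%E by [].
have c1 : (m ([set (0%R:G)] : set (borel G)) <= 1)%E by apply: probability_le1; exact: (@set1_meas R G _ mG).
move: c0 c1; case E: (m _) => [r| |] //= r0 r1.
rewrite lee_fin in r0; rewrite lee_fin in r1.
apply/eqP; rewrite eqe; apply/negPn/negP => rn0.
have rp : 0 < r by rewrite lt_neqAle eq_sym rn0.
have [B _ Bn] := infinite_set_fset (Num.Def.archi_bound r^-1) inf.
have mB : (m (\big[setU/set0]_(i <- B) ([set i] : set (borel G))) <= 1)%E.
  apply: probability_le1; apply: bigsetU_measurable => i _; exact: (@set1_meas R G _ mG).
rewrite measure_fbigsetU in mB; last 2 first.
- move=> i _; exact: (@set1_meas R G _ mG).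
- by move=> i j _ _ [z [/= -> ->]].
rewrite (eq_bigr (fun=> r%:E)) in mB; last by move=> i _; exact: (etrans (mc i) E).
rewrite sum_cst_seq -EFin_natmul lee_fin in mB.
have ry : 0 <= r^-1 by rewrite invr_ge0 ltW.
have h := archi_boundP ry.
have hy : r^-1 * r = 1 by rewrite mulVf // gt_eqF.
have kB : ((Num.Def.archi_bound r^-1)%:R : R) <= (#|` B|)%:R by rewrite ler_nat.
rewrite -mulr_natl in mB.

exact: (@arith_key R r _ _ _ rp h hy kB mB).
Qed.

Definition pG (G : topologicalZmodType) : Type := G.
HB.instance Definition _ (G : topologicalZmodType) := Topological.copy (pG G) G.
HB.instance Definition _ (G : topologicalZmodType) :=
  isPointed.Build (pG G) (0 : G).
Lemma unif (G : topologicalZmodType) (N : set G) : nbhs 0 N ->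
  exists V : set G, [/\ open V, V 0 & forall a b, V a -> V b -> N (b - a)].
Proof.
move=> N0.
have := @sub_continuous G (0,0) N.
rewrite /= subr0 => /(_ N0).
case=> -[A B] /= [nA nB] sAB.
have : nbhs (0:G) (A `&` B) by apply: filterI.
rewrite nbhsE => -[V [oV V0] VAB].
exists V; split => // a b Va Vb.
have := sAB (b, a); apply; split; [exact: (VAB _ Vb).1|exact: (VAB _ Va).2].
Qed.

Lemma fincov (G : topologicalZmodType) (V : set G) : compact [set: G] ->
  open V -> V 0 ->
  exists D' : {fset G}, forall y, exists2 x, x \in D' & V (y - x).
Proof.
move=> cG oV V0.
have cont x : continuous (fun y : G => y - x).
  move=> y; apply: (@continuous_comp _ _ _ (fun y => (y, x)) (fun p : G * G => p.1 - p.2)).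
    by apply: cvg_pair; [exact: cvg_id|exact: cvg_cst].
  exact: sub_continuous.
have : cover_compact [set: pG G] by rewrite -(@compact_cover (pG G)).
move=> /(_ G setT (fun x => (fun y : G => y - x) @^-1` V)).
case.
- by move=> x _; apply: open_comp => // y _; exact: cont.
- by move=> y _; exists y => //=; rewrite subrr.
move=> D' _ cov; exists D' => y.
have [x xD Vx] := cov y I; by exists x.
Qed.

Lemma inv_small (R : realType) (e : R) : 0 < e ->
  exists k, forall n, (k <= n)%N -> n.+1%:R^-1 < e.
Proof.
move=> e0; exists (Num.Def.archi_bound e^-1) => n kn.
have ey : 0 <= e^-1 by rewrite invr_ge0 ltW.
have h := archi_boundP ey.
rewrite invf_plt ?posrE ?ltr0n //.
apply: (lt_le_trans h); rewrite ler_nat; exact: (leq_trans kn).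
Qed.

Lemma negl_big (d : measure_display) (T : measurableType d) (R : realType)
  (mu : {measure set T -> \bar R}) (I : Type) (s : seq I) (F : I -> set T) :
  (forall i, mu.-negligible (F i)) ->
  mu.-negligible (\big[setU/set0]_(i <- s) F i).
Proof.
move=> PF; elim/big_ind : _.
- exact: negligible_set0.
- by move=> A B; exact: negligibleU.
- by move=> i _; exact: PF.
Qed.

Theorem corollary1 (R : realType) (G : topologicalZmodType)
  (m : probability (borel G) R) (rho : G -> G -> R) :
  compact [set: G] ->
  metrizable R G ->
  ~ finite_set [set: G] ->
  (* m is the normalized Haar measure: a translation-invariant Borel
     probability measure *)
  (forall (h : G) (A : set (borel G)), measurable A ->
     m [set x | A (x + h)] = m A) ->
  admissible_semimetric m rho ->
  (forall x y h : G, rho (x + h) (y + h) = rho x y) ->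
  exists g : nat -> G,
    [/\ (forall n, g n != 0),
        g @ \oo --> (0 : G) &
        (fun n => rho 0 (g n)) @ \oo --> (0 : R)].
Proof.
move=> cG mG inf inv [rho0 _ _ [X [mX mX1 smX [D [cD DX Dd]] _]]] rinv.
have s0 := @set1_null R G m mG inf inv.
have key (e : R) (N : set G) : 0 < e -> nbhs 0 N ->
    exists h, [/\ h != 0, N h & rho 0 h < e].
  move=> e0 N0; apply: contrapT => nh.
  have e20 : 0 < e / 2 by rewrite divr_gt0.
  pose Bz z := X `&` [set y | rho z y < e / 2].
  have [z Xz nB] : exists2 z, X z & ~ m.-negligible (Bz z).
    apply: contrapT => allneg.
    have allN z : X z -> m.-negligible (Bz z).
      by move=> Xz; apply: contrapT => nz; apply: allneg; exists z.
    have [f finj] := countable_injP _ cD.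
    pose F n := X `&` [set y | exists2 z, D z /\ f z = n & rho z y < e / 2].
    have FN n : m.-negligible (F n).
      case: (pselect (exists z, D z /\ f z = n)) => [[z0 [Dz0 fz0]]|nz].
        apply: (negligibleS _ (allN z0 (DX _ Dz0))).
        move=> y [Xy [z [Dz fz] rzy]]; split => //=.
        have zz : z = z0.
          by apply: finj; [exact/mem_set|exact/mem_set|rewrite fz fz0].
        by rewrite -zz.
      apply: (negligibleS _ (negligible_set0 m)).
      by move=> y [_ [z [Dz fz] _]]; apply: nz; exists z.
    have : m.-negligible (\bigcup_n F n) by apply: negligible_bigcup.
    case=> A [mA mA0 sA].
    have : (m X <= m A)%E.
      apply: le_measure; [exact/mem_set|exact/mem_set|].
      move=> x Xx; apply: sA.
      have [z Dz rxz] := Dd x Xx (e / 2) e20.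
      exists (f z) => //; split => //; exists z => //.
      by have [_ <- _] := smX x z z Xx (DX _ Dz) (DX _ Dz).
    by rewrite mX1 mA0 lee_fin ler10.
  have [V [oV V0 VN]] := @unif G N N0.
  have [D' cov] := @fincov G V cG oV V0.
  apply: nB.
  pose W x := [set y : G | V (y - x)].
  apply: (@negligibleS _ _ _ _ (\big[setU/set0]_(x <- D') (Bz z `&` W x))).
    move=> y By; have [x xD Vx] := cov y.
    rewrite -bigcup_fset; exists x => //.
  apply: negl_big => x.
  case: (pselect (exists y, Bz z y /\ W x y)) => [[y0 [B0 W0]]|ny]; last first.
    apply: (negligibleS _ (negligible_set0 m)).
    by move=> y [By Wy]; apply: ny; exists y.
  apply: (negligibleS (A := [set y0])).
    move=> y [By Wy] /=.
    apply/eqP; rewrite -subr_eq0; apply/negPn/negP => yn0.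
    apply: nh; exists (y - y0); split => //.
      have := VN _ _ W0 Wy; congr N.
      by rewrite opprB addrA subrK.
    have -> : rho 0 (y - y0) = rho y0 y.
      by rewrite -(rinv 0 (y - y0) y0) add0r subrK.
    case: B0 => Xy0 ry0; case: By => Xy ry.
    have [_ sym tri] := smX y0 z y Xy0 Xz Xy.
    apply: (le_lt_trans tri).
    have [_ sym2 _] := smX z y0 y0 Xz Xy0 Xy0.
    rewrite -sym2.
    by rewrite [e]splitr; apply: ltrD.
  exists [set y0]; split; [exact: (@set1_meas R G y0 mG)|exact: s0|by []].
have [d [d0 dE dsym dtri dnb]] := mG.
have gex n : exists h : G,
    [/\ h != 0, d 0 h < n.+1%:R^-1 & rho 0 h < n.+1%:R^-1].
  have np : 0 < n.+1%:R^-1 :> R by rewrite invr_gt0 ltr0n.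
  have Nn : nbhs (0 : G) [set y | d 0 y < n.+1%:R^-1].
    by apply/dnb; exists n.+1%:R^-1.
  have [h [h0 Nh rh]] := key _ _ np Nn.
  by exists h.
have [g gP] := choice gex.
exists g; split.
- by move=> n; have [] := gP n.
- move=> A /dnb [e e0 sA].
  have [k kP] := @inv_small R e e0.
  exists k => // n /= kn; apply: sA => /=.
  have [_ h _] := gP n; exact: (lt_trans h (kP n kn)).
- apply/cvgrPdist_lt => e e0; have [k kP] := @inv_small R e e0.
  exists k => // n /= kn; rewrite sub0r normrN ger0_norm ?rho0 //.
  have [_ _ h] := gP n; exact: (lt_trans h (kP n kn)).
Qed.
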